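(* Let $r,s\in(0,1)$ satisfy \[s = 2r(1-r)\qquad\text{and}\qquad r = 3s(1-s)^2 + 3s^2(1-s).\] Then the product measures $\mu_r$ and $\mu_s$ on $\Omega=\{0,1\}^{\mathbb{N}}$ are not homeomorphic; that is, there is no homeomorphism $h:\Omega\to\Omega$ with $\mu_s = \mu_r\circ h^{-1}$ (i.e. $\mu_s(A)=\mu_r(h^{-1}(A))$ for all Borel $A\subseteq\Omega$).
   Context: $\Omega=\{0,1\}^{\mathbb{N}}$ is the Cantor set with the product topology. For $r\in[0,1]$, $\lambda_r$ is the probability measure on $\{0,1\}$ with $\lambda_r\{1\}=r$, $\lambda_r\{0\}=1-r$, and $\mu_r$ is the infinite product measure $\lambda_r^{\mathbb{N}}$ on $\Omega$ (the Bernoulli measure). Two Borel measures $\mu,\nu$ on $\Omega$ are called homeomorphic if there is a homeomorphism $h$ of $\Omega$ onto itself with $\nu=\mu\circ h^{-1}$. *)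

(* Defs.v *)
From HB Require Import structures.
From mathcomp Require Import all_boot all_order all_algebra.
From mathcomp Require Import all_classical all_reals all_analysis.
Set Implicit Arguments.
Unset Strict Implicit.
Unset Printing Implicit Defensive.
Import Order.TTheory GRing.Theory Num.Theory.
Local Open Scope classical_set_scope.
Local Open Scope ring_scope.

Definition Omega : topologicalType := cantor_space.

Definition BorelOmega : measurableType (sigma_display (@open Omega)) :=
  g_sigma_algebraType (@open Omega).

(* lambda_r on {0,1}: lambda_r{1} = r, lambda_r{0} = 1 - r (true = 1). *)
Definition lambda {R : realType} (r : R) (b : bool) : R :=
  if b then r else 1 - r.

Definition cylinder (n : nat) (w : nat -> bool) : set BorelOmega :=
  [set x : BorelOmega | forall i, (i < n)%N -> x i = w i].

(* mu is the Bernoulli product measure mu_r = lambda_r^N: it is the (unique,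
   by the pi-lambda theorem, since cylinders form a pi-system generating the
   Borel sets and include Omega) Borel measure on Omega whose value on each
   cylinder is the product of the lambda_r-weights. *)
Definition is_bernoulli {R : realType} (r : R)
    (mu : {measure set BorelOmega -> \bar R}) : Prop :=
  forall (n : nat) (w : nat -> bool),
    mu (cylinder n w) = (\prod_(i < n) lambda r (w i))%:E.

Definition homeomorphism (h : Omega -> Omega) : Prop :=
  exists g : Omega -> Omega,
    [/\ cancel h g, cancel g h, continuous h & continuous g].

(* Main.v *)
Require Import Defs.
From HB Require Import structures.
From mathcomp Require Import all_boot all_order all_algebra.
From mathcomp Require Import all_classical all_reals all_analysis.
From mathcomp Require Import finmap ring.
Import Order.TTheory GRing.Theory Num.Theory.
Local Open Scope classical_set_scope.
Local Open Scope ring_scope.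

Lemma int_eq_noroot (n d : int) : coprime `|n| `|d| ->
  12 * n ^+ 3 - 24 * n ^+ 2 * d + 18 * n * d ^+ 2 - 5 * d ^+ 3 != 0.
Proof.
move=> cop; apply/eqP => E.
have h2d : (2 %| d)%Z.
  have : (2 %| 5 * d ^+ 3)%Z.
    apply/dvdzP; exists (6 * n ^+ 3 - 12 * n ^+ 2 * d + 9 * n * d ^+ 2).
    have -> : 5 * d ^+ 3 = 12 * n ^+ 3 - 24 * n ^+ 2 * d + 18 * n * d ^+ 2 - (12 * n ^+ 3 - 24 * n ^+ 2 * d + 18 * n * d ^+ 2 - 5 * d ^+ 3) by ring.
    rewrite E; ring.
  rewrite Gauss_dvdzr // => hh; have : (2 %| `|d ^+ 3|)%N := hh; rewrite abszX Euclid_dvdX // => /andP [] hh2 _; exact: hh2.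
have [e de] := dvdzP h2d.
have h2n : (2 %| n)%Z.
  have : (2 %| 3 * n ^+ 3)%Z.
    apply/dvdzP; exists (6 * n ^+ 2 * e - 9 * n * e ^+ 2 + 5 * e ^+ 3).
    have : 4 * (3 * n ^+ 3 - (6 * n ^+ 2 * e - 9 * n * e ^+ 2 + 5 * e ^+ 3) * 2) = 0.
      by rewrite -E de; ring.
    by move/eqP; rewrite mulf_eq0 /= subr_eq0 => /eqP.
  rewrite Gauss_dvdzr // => hh; have : (2 %| `|n ^+ 3|)%N := hh; rewrite abszX Euclid_dvdX // => /andP [] hh2 _; exact: hh2.
move: cop; rewrite /coprime => /eqP g1.
have : (2 %| gcdn `|n| `|d|)%N by rewrite dvdn_gcd; exact/andP.
by rewrite g1.
Qed.

Lemma rat_noroot (x : rat) : 12 * x ^+ 3 - 24 * x ^+ 2 + 18 * x - 5 != 0.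
Proof.
apply/eqP => E.
have dn0 : (denq x)%:~R != 0 :> rat by rewrite intr_eq0 denq_neq0.
have := @int_eq_noroot (numq x) (denq x) (coprime_num_den x).
set F := (X in X != 0) => /eqP; apply.
apply/eqP; rewrite -(intr_eq0 rat) /F.
rewrite !rmorphD !rmorphN !rmorphM /= numqE.
set D := (denq x)%:~R.
apply/eqP.
transitivity ((12 * x ^+ 3 - 24 * x ^+ 2 + 18 * x - 5) * D ^+ 3); first ring.
by rewrite E mul0r.
Qed.

Definition pZ : {poly int} := Poly [:: -5; 18; -24; 12].

Lemma pZ_horner (S : comNzRingType) (x : S) :
  (map_poly (intr : int -> S) pZ).[x] = 12 * x ^+ 3 - 24 * x ^+ 2 + 18 * x - 5.
Proof.
rewrite /pZ map_Poly horner_Poly /= !rmorphN /=.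
rewrite mul0r add0r. ring.
Qed.

Lemma pZ_size : size pZ = 4%N.
Proof. by rewrite /pZ (@PolyK _ 0). Qed.

Lemma pQ_irr : irreducible_poly (map_poly (intr : int -> rat) pZ).
Proof.
apply: cubic_irreducible; first by rewrite size_map_inj_poly ?pZ_size //; exact: intr_inj.
move=> x; rewrite /root pZ_horner; exact: rat_noroot.
Qed.

Lemma root_div5 (S : numFieldType) (x : S)
  (hx : 12 * x ^+ 3 - 24 * x ^+ 2 + 18 * x - 5 = 0) (Q : {poly int}) :
  (map_poly (intr : int -> S) Q).[x] = 0 -> (5 %| Q`_0)%Z.
Proof.
move=> hQ.
set pQ := map_poly (intr : int -> rat) pZ.
set Qq := map_poly (intr : int -> rat) Q.
have hmap : forall P : {poly int},
    map_poly (ratr : rat -> S) (map_poly intr P) = map_poly intr P.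
  move=> P; rewrite -map_poly_comp; apply: eq_map_poly => z /=; exact: ratr_int.
have hpx : (map_poly (ratr : rat -> S) pQ).[x] = 0 by rewrite hmap pZ_horner.
have hQx : (map_poly (ratr : rat -> S) Qq).[x] = 0 by rewrite hmap.
have dv : pQ %| Qq.
  have [irr1 irr2] := pQ_irr.
  have [g1 | gn1] := eqVneq (size (gcdp pQ Qq)) 1%N.
    have : coprimep pQ Qq by rewrite coprimep_def g1.
    case/Bezout_coprimepP => u hu.
    have /size_poly1P [c c0 hc] : size (u.1 * pQ + u.2 * Qq) == 1%N.
      by rewrite (eqp_size hu) size_poly1.
    have := congr1 (fun P => (map_poly (ratr : rat -> S) P).[x]) hc.
    rewrite /= rmorphD !rmorphM /= hornerD !hornerM hpx hQx !mulr0 addr0.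
    rewrite map_polyC hornerC /= => /esym/eqP.
    by rewrite fmorph_eq0 (negbTE c0).
  have := irr2 _ gn1 (dvdp_gcdl _ _).
  move=> /eqp_dvdl <-; exact: dvdp_gcdr.
have dvZ : pZ %| Q by rewrite -dvdp_rat_int.
have [G hG] := dvdpP_int dvZ.
set zp := zprimitive pZ in hG.
set c := zcontents pZ.
have hE := zpolyEprim pZ.
have ca : c * zp`_0 = -5.
  by rewrite -coefZ -/c -/zp -hE /pZ coef_Poly.
have cb : c * zp`_3 = 12.
  by rewrite -coefZ -/c -/zp -hE /pZ coef_Poly.
set a := zp`_0 in ca *; set b := zp`_3 in cb.
have h1 : c * (- 5 * a - 2 * b) = 1.
  transitivity (- 5 * (c * a) - 2 * (c * b)); first ring.
  by rewrite ca cb.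
have ha : a = 5 * (5 * a + 2 * b).
  transitivity (a * (c * (- 5 * a - 2 * b))); first by rewrite h1 mulr1.
  transitivity ((c * a) * (- 5 * a - 2 * b)); first ring.
  rewrite ca; ring.
rewrite hG coef0M -/a; apply/dvdzP; exists ((5 * a + 2 * b) * G`_0).
by rewrite {1}ha; ring.
Qed.

Lemma cyl_open (n : nat) (w : nat -> bool) : @open Omega (cylinder n w).
Proof.
elim: n => [|n IH].
  have -> : cylinder 0 w = setT by apply/seteqP; split => x //= _ i; rewrite ltn0.
  exact: openT.
have -> : cylinder n.+1 w = cylinder n w `&` (proj n @^-1` [set w n]).
  apply/seteqP; split => x /=.
    by move=> h; split => [i lti|]; apply: h => //; exact: ltnW.
  move=> [h1 h2] i; rewrite ltnS leq_eqVlt => /predU1P [->|lt]; first exact: h2.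
  exact: h1.
apply: openI => //; apply: open_comp; last exact: discrete_open.
by move=> + _; exact: proj_continuous.
Qed.

Lemma cyl_closed (n : nat) (w : nat -> bool) : @closed Omega (cylinder n w).
Proof.
elim: n => [|n IH].
  have -> : cylinder 0 w = setT by apply/seteqP; split => x //= _ i; rewrite ltn0.
  exact: closedT.
have -> : cylinder n.+1 w = cylinder n w `&` (proj n @^-1` [set w n]).
  apply/seteqP; split => x /=.
    by move=> h; split => [i lti|]; apply: h => //; exact: ltnW.
  move=> [h1 h2] i; rewrite ltnS leq_eqVlt => /predU1P [->|lt]; first exact: h2.
  exact: h1.
apply: closedI => //; apply: closed_comp; last exact: discrete_closed.
by move=> + _; exact: proj_continuous.
Qed.

Lemma cyl_mono (m n : nat) (x : nat -> bool) : (m <= n)%N ->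
  cylinder n x `<=` cylinder m x.
Proof. by move=> mn z hz i lti; apply: hz; exact: leq_trans lti mn. Qed.

Lemma open_cyl (U : set Omega) (x : Omega) : open U -> U x ->
  exists n, cylinder n x `<=` U.
Proof.
move=> oU Ux.
have := cantor_space_compact; rewrite compact_cover => /(_ nat setT
  (fun n => ~` (cylinder n x) `|` U)).
case.
- move=> n _; apply: openU => //; apply: closed_openC; exact: cyl_closed.
- move=> z _; have [->|nzx] := pselect (z = x); first by exists 0%N => //; right.
  have [i hi] : exists i, z i != x i.
    apply/not_existsP => h; apply: nzx; apply: funext => i.
    by have /negP := h i; rewrite negbK => /eqP.
  exists i.+1 => //; left => hz; move: hi; rewrite hz ?eqxx //.
- move=> D' _ hcov; exists (\max_(i <- (D' : seq nat)) i) => z hz.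
  have [i iD' [hi|//]] := hcov z I.
  exfalso; apply: hi; apply: cyl_mono hz.
  by apply: (@leq_bigmax_seq _ _ _ id).

Qed.

Lemma clopen_level (V : set Omega) : open V -> closed V ->
  exists m, forall a b : Omega, (forall i, (i < m)%N -> a i = b i) -> V a -> V b.
Proof.
move=> oV cV.
have hn : forall x : Omega, exists n, cylinder n x `<=` V \/ cylinder n x `<=` ~` V.
  move=> x; have [Vx|nVx] := pselect (V x).
    by have [n hn] := open_cyl _ _ oV Vx; exists n; left.
  by have [n hn] := open_cyl _ _ (closed_openC cV) nVx; exists n; right.
pose nx x := projT1 (cid (hn x)).
have hnx x : cylinder (nx x) x `<=` V \/ cylinder (nx x) x `<=` ~` V.
  exact: (projT2 (cid (hn x))).
have := cantor_space_compact; rewrite compact_cover => /(_ Omega setT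
  (fun x => cylinder (nx x) x)).
case.
- move=> x _; exact: cyl_open.
- by move=> z _; exists z => //.
move=> D' _ hcov; exists (\max_(x <- (D' : seq Omega)) nx x) => a b hab Va.
have [x xD' hax] := hcov a I.
have le : (nx x <= \max_(x <- (D' : seq Omega)) nx x)%N.
  by apply: (@leq_bigmax_seq _ _ _ nx).
have hbx : cylinder (nx x) x b.
  move=> i lti; rewrite -hab; [exact: hax|exact: leq_trans lti le].
case: (hnx x) => h; first exact: h.
by exfalso; exact: (h a hax Va).
Qed.
Inductive Zr {R : realType} (r : R) : R -> Prop :=
| Zr_int (k : int) : Zr r k%:~R
| Zr_r : Zr r r
| Zr_add y z : Zr r y -> Zr r z -> Zr r (y + z)
| Zr_mul y z : Zr r y -> Zr r z -> Zr r (y * z).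

Lemma Zr_opp {R : realType} (r y : R) : Zr r y -> Zr r (- y).
Proof.
move=> h; have -> : - y = (-1)%:~R * y by rewrite mulrN1z mulNr mul1r.
exact: Zr_mul (Zr_int _ _) h.
Qed.

Lemma Zr_nat {R : realType} (r : R) (k : nat) : Zr r k%:R.
Proof. by have := Zr_int r k; rewrite pmulrn. Qed.

Lemma Zr_1 {R : realType} (r : R) : Zr r 1.
Proof. by have := Zr_nat r 1. Qed.

Lemma Zr_0 {R : realType} (r : R) : Zr r 0.
Proof. by have := Zr_nat r 0. Qed.

Definition Cong {R : realType} (r t y : R) (k : nat) :=
  exists z, Zr r z /\ y = k%:R * t + t ^+ 2 * z.

Lemma Cong0 {R : realType} (r t : R) : Cong r t 0 0.
Proof. by exists 0; split; [exact: Zr_0|rewrite mulr0 mul0r addr0]. Qed.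

Lemma Cong_add {R : realType} (r t y1 y2 : R) k1 k2 :
  Cong r t y1 k1 -> Cong r t y2 k2 -> Cong r t (y1 + y2) (k1 + k2).
Proof.
move=> [z1 [h1 ->]] [z2 [h2 ->]]; exists (z1 + z2); split; first exact: Zr_add.
rewrite natrD; ring.
Qed.

Fixpoint agreeb (m : nat) (u v : nat -> bool) : bool :=
  if m is m'.+1 then agreeb m' u v && (u m' == v m') else true.

Lemma agreebP m u v : reflect (forall i, (i < m)%N -> u i = v i) (agreeb m u v).
Proof.
elim: m => [|m IH] /=; first by apply: ReflectT => i; rewrite ltn0.
apply: (iffP andP).
  move=> [/IH h /eqP e] i; rewrite ltnS leq_eqVlt => /predU1P [->//|]; exact: h.
move=> h; split; first by apply/IH => i lti; apply: h; exact: ltnW.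
by apply/eqP; apply: h.
Qed.

Lemma agreeb_sym m u v : agreeb m u v = agreeb m v u.
Proof. by elim: m => //= m ->; rewrite eq_sym. Qed.

Definition ee (i : nat) : nat -> bool := fun k => k == i.
Definition zero : nat -> bool := fun _ => false.
Definition upd (u : nat -> bool) (m : nat) (b : bool) : nat -> bool :=
  fun k => if k == m then b else u k.

Lemma agreeb_e n M u : (n <= M)%N -> agreeb n (ee M) u = agreeb n zero u.
Proof.
elim: n => [//|n IH] lt /=; rewrite IH ?(ltnW lt) //.
by rewrite /ee /zero; move: lt; rewrite ltn_neqAle => /andP [/negbTE -> _].
Qed.

Lemma agreeb_upd m M v u b : (m <= M)%N -> agreeb m v (upd u M b) = agreeb m v u.
Proof.
elim: m => [//|m IH] lt /=; rewrite IH ?(ltnW lt) //.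
by rewrite /upd; move: lt; rewrite ltn_neqAle => /andP [/negbTE -> _].
Qed.

Lemma agreeb_updS m v u b : agreeb m.+1 v (upd u m b) = agreeb m v u && (v m == b).
Proof. by rewrite /= agreeb_upd // /upd eqxx. Qed.

Definition Pr {R : realType} (t : R) n (u : nat -> bool) := \prod_(i < n) lambda t (u i).

Lemma Zr_lambda {R : realType} (r t : R) b : Zr r t -> Zr r (lambda t b).
Proof.
move=> ht; case: b => //=; apply: Zr_add; [exact: Zr_1|exact: Zr_opp].
Qed.

Lemma prodZ {R : realType} (r t : R) n u : Zr r t -> Zr r (Pr t n u).
Proof.
move=> ht; elim: n => [|n IH]; first by rewrite /Pr big_ord0; exact: Zr_1.
by rewrite /Pr big_ord_recr /=; apply: Zr_mul => //; exact: Zr_lambda.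
Qed.

Lemma prod1 {R : realType} (r t : R) n u : Zr r t -> agreeb n zero u ->
  exists z, Zr r z /\ Pr t n u = 1 + t * z.
Proof.
move=> ht; elim: n => [|n IH] /=.
  by move=> _; exists 0; split; [exact: Zr_0|rewrite /Pr big_ord0 mulr0 addr0].
move=> /andP [/IH [z [hz e]] /eqP hu].
exists (z - 1 - t * z); split.
  apply: Zr_add; first (apply: Zr_add => //; exact/Zr_opp/Zr_1).
  by apply/Zr_opp/Zr_mul.
rewrite /Pr big_ord_recr /= -/(Pr t n u) e -hu /zero /=; ring.
Qed.

Lemma prodC {R : realType} (r t : R) n u : Zr r t -> ~~ agreeb n zero u ->
  Cong r t (Pr t n u) (\sum_(i < n) agreeb n (ee i) u)%N.
Proof.
move=> ht; elim: n => [//|n IH] /=.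
rewrite /Pr big_ord_recr big_ord_recr /= -/(Pr t n u) /ee eqxx /= -/(ee n).
have hi : forall i : 'I_n, (n == i) = false.
  by move=> i; apply/negbTE; rewrite neq_ltn ltn_ord orbT.
under eq_bigr => i _ do rewrite hi.
rewrite agreeb_e //.
case hz : (agreeb n zero u) => /=.
  rewrite /zero => hu; have {}hu : u n = true by case: (u n) hu.
  have [z [hz' e]] := @prod1 _ r t n u ht hz.
  rewrite hu /= big1 => [|i _]; last by rewrite andbF.
  rewrite e add0n; exists z; split => //; ring.
move=> _; have [z [hz' e]] := IH (negbT hz).
case hu : (u n) => /=.
  rewrite big1 => [|i _]; last by rewrite andbF.
  rewrite e; exists ((\sum_(i < n) agreeb n (ee i) u)%:R + t * z); split.
    by apply: Zr_add; [exact: Zr_nat|exact: Zr_mul].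
  ring.
under eq_bigr => i _ do rewrite andbT.
rewrite addn0 e; exists (z - (\sum_(i < n) agreeb n (ee i) u)%:R - t * z); split.
  apply: Zr_add; first (apply: Zr_add => //; exact/Zr_opp/Zr_nat).
  by apply/Zr_opp/Zr_mul.
ring.
Qed.

Fixpoint val {R : realType} (W : set (nat -> bool)) (t : R) (n d m : nat)
    (u : nat -> bool) : R :=
  if d is d'.+1 then val W t n d' m.+1 (upd u m false) + val W t n d' m.+1 (upd u m true)
  else if `[< W u >] then Pr t n u else 0.

Definition KK (W : set (nat -> bool)) (n m : nat) (u : nat -> bool) : nat :=
  (\sum_(i < n) (`[< W (ee i) >] && agreeb m (ee i) u))%N.

Lemma val_cong {R : realType} (r t : R) (W : set (nat -> bool)) n :
  Zr r t ->
  (forall x y, agreeb n x y -> W x -> W y) -> ~ W zero ->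
  forall d m u, (m + d)%N = n -> Cong r t (val W t n d m u) (KK W n m u).
Proof.
move=> ht hdet h0; elim => [|d IH] m u.
  rewrite addn0 => hm; subst n => /=.
  have hagree : forall i, agreeb m (ee i) u -> (`[< W (ee i) >] = `[< W u >]).
    move=> i hi; apply: asbool_equiv_eq; split; apply: (hdet) => //.
    by rewrite agreeb_sym.
  case: asboolP => Wu.
    have nz : ~~ agreeb m zero u.
      by apply/negP => hz; apply: h0; apply: (hdet) Wu; rewrite agreeb_sym.
    rewrite /KK (_ : (\sum_(i < m) _)%N = (\sum_(i < m) agreeb m (ee i) u)%N); last first.
      apply: eq_bigr => i _.
      case hh : (agreeb m (ee i) u); rewrite ?andbF ?andbT //.
      by rewrite (hagree _ hh) (asboolT Wu).
    exact: prodC.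
  rewrite /KK big1; first exact: Cong0.
  move=> i _; case hh : (agreeb m (ee i) u); rewrite ?andbF ?andbT //.
  by rewrite (hagree _ hh) (asboolF Wu).
move=> hm /=.
have -> : KK W n m u = (KK W n m.+1 (upd u m false) + KK W n m.+1 (upd u m true))%N.
  rewrite /KK -big_split; apply: eq_bigr => i _.
  rewrite !agreeb_updS; case: (ee i m); case: `[< W (ee i) >]; case: (agreeb m (ee i) u) => //.
apply: Cong_add; apply: IH; by rewrite addSnnS.
Qed.

Lemma cyl_meas n w : measurable (cylinder n w).
Proof. apply: sub_sigma_algebra; exact: cyl_open. Qed.

Lemma cylS m u b : cylinder m.+1 (upd u m b) = cylinder m u `&` [set x | x m = b].
Proof.
apply/seteqP; split => x /=.
  move=> h; split; last by rewrite h // /upd eqxx.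
  move=> i lti; rewrite h; last exact: ltnW.
  by rewrite /upd ltn_eqF.
move=> [h1 h2] i; rewrite ltnS leq_eqVlt => /predU1P [->|lt].
  by rewrite /upd eqxx.
by rewrite /upd ltn_eqF // h1.
Qed.

Lemma meas_val {R : realType} (t : R) (mu : {measure set BorelOmega -> \bar R})
  (Hb : is_bernoulli t mu) (W : set BorelOmega) n
  (hdet : forall x y, agreeb n x y -> W x -> W y) :
  forall d m u, (m + d)%N = n ->
    measurable (W `&` cylinder m u) /\ mu (W `&` cylinder m u) = (val W t n d m u)%:E.
Proof.
elim => [|d IH] m u.
  rewrite addn0 => hm; subst n => /=.
  case: asboolP => Wu.
    have -> : W `&` cylinder m u = cylinder m u.
      apply/seteqP; split => x; first by case.
      move=> hx; split => //; apply: (hdet u) Wu; apply/agreebP => i lti.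
      by rewrite hx.
    split; first exact: cyl_meas.
    by rewrite Hb.
  have -> : W `&` cylinder m u = set0.
    apply/seteqP; split => x //= [Wx hx]; apply: Wu; apply: (hdet x) Wx.
    by apply/agreebP => i lti; rewrite hx.
  by split; [exact: measurable0|rewrite measure0].
move=> hm /=.
have [m0 e0] := IH m.+1 (upd u m false) (etrans (addSnnS _ _) hm).
have [m1 e1] := IH m.+1 (upd u m true) (etrans (addSnnS _ _) hm).
have -> : W `&` cylinder m u =
    (W `&` cylinder m.+1 (upd u m false)) `|` (W `&` cylinder m.+1 (upd u m true)).
  rewrite !cylS; apply/seteqP; split => x /=.
    by move=> [Wx hx]; case hxm : (x m); [right|left].
  by case => [[Wx [hx _]]|[Wx [hx _]]].
split; first exact: measurableU.
rewrite measureU //; first by rewrite EFinD -e0 -e1.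
rewrite !cylS; apply/seteqP; split => x //= [[_ [_ h1]] [_ [_ h2]]].
by move: h1; rewrite h2.
Qed.

Lemma Zr_poly {R : realType} (r y : R) : Zr r y ->
  exists A : {poly int}, y = (map_poly (intr : int -> R) A).[r].
Proof.
elim => [k| |y1 z1 _ [A ->] _ [B ->]|y1 z1 _ [A ->] _ [B ->]].
- by exists k%:P; rewrite map_polyC hornerC.
- by exists 'X; rewrite map_polyX hornerX.
- by exists (A + B); rewrite rmorphD hornerD.
- by exists (A * B); rewrite rmorphM hornerM.
Qed.

Lemma final_contra {R : realType} (r : R)
  (hp : 12 * r ^+ 3 - 24 * r ^+ 2 + 18 * r - 5 = 0) (w : R) (hw : Zr r w)
  (c : int) : c%:~R + r * w = 0 -> (5 %| c)%Z.
Proof.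
move=> e; have [A hA] := @Zr_poly R r w hw.
have := @root_div5 R r hp (c%:P + 'X * A).
rewrite coefD coefC coefXM /= addr0; apply.
by rewrite rmorphD rmorphM /= map_polyC map_polyX hornerD hornerM hornerC hornerX -hA.
Qed.

Lemma sum_eqp m p : (\sum_(i < m) ((i : nat) == p))%N = (p < m)%N.
Proof.
elim: m => [|m IH]; first by rewrite big_ord0.
rewrite big_ord_recr /= IH ltnS.
by case: (ltngtP p m).
Qed.

Theorem mainTheorem1 (R : realType) (r s : R)
    (hr : 0 < r < 1) (hs : 0 < s < 1)
    (hsr : s = 2 * r * (1 - r))
    (hrs : r = 3 * s * (1 - s) ^+ 2 + 3 * s ^+ 2 * (1 - s))
    (mu_r mu_s : {measure set BorelOmega -> \bar R})
    (Hr : is_bernoulli r mu_r) (Hs : is_bernoulli s mu_s) :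
  ~ exists h : Omega -> Omega,
      homeomorphism h /\
      (forall A : set BorelOmega, measurable A -> mu_s A = mu_r (h @^-1` A)).
Proof.
move=> [h [[g [hg gh hc gc]] hmu]].
have r0 : r != 0 by case/andP: hr => /gt_eqF ->.
have hp : 12 * r ^+ 3 - 24 * r ^+ 2 + 18 * r - 5 = 0.
  have e : r * (12 * r ^+ 3 - 24 * r ^+ 2 + 18 * r - 5) =
      r - (3 * s * (1 - s) ^+ 2 + 3 * s ^+ 2 * (1 - s)) by rewrite hsr; ring.
  by move: e; rewrite -hrs subrr => /eqP; rewrite mulf_eq0 (negbTE r0) /= => /eqP.
have [j [j1 hj]] : exists j, (j <= 1)%N /\ (ee j : Omega) <> h zero.
  have [e0|ne0] := pselect ((ee 0 : Omega) = h zero).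
    exists 1%N; split => // e1; have := congr1 (fun f : nat -> bool => f 0%N) (etrans e1 (esym e0)).
    by rewrite /ee.
  by exists 0%N.
pose y := g (ee j).
have yz : y <> zero.
  by move=> e; apply: hj; rewrite -(gh (ee j)) -/y e.
have [p yp] : exists p, y p = true.
  apply/not_existsP => hn; apply: yz; apply: funext => i.
  by have := hn i; rewrite /zero; case: (y i).
pose Cy : set Omega := cylinder p.+1 y.
have oG : open (g @^-1` Cy).
  apply: open_comp; [by move=> x _; exact: gc|exact: cyl_open].
have [M0 hM0] := open_cyl _ _ oG (fun i _ => erefl (y i)).
pose M := maxn M0 j.+1.
pose Wc : set BorelOmega := cylinder M (ee j).
have WsubG : Wc `<=` g @^-1` Cy.
  apply: subset_trans hM0; apply: cyl_mono; exact: leq_maxl.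
have jM : (j < M)%N by rewrite leq_max ltnSn orbT.
pose V : set Omega := h @^-1` Wc.
have oV : open V.
  apply: open_comp; [by move=> x _; exact: hc|exact: cyl_open].
have cV : closed V.
  apply: closed_comp; [by move=> x _; exact: hc|exact: cyl_closed].
have [m hmV] := clopen_level V oV cV.
have VsubCy : V `<=` Cy.
  by move=> x /WsubG; rewrite /= hg.
have heq := hmu Wc (cyl_meas M (ee j)).
have cyl0 : forall W : set BorelOmega, W `&` cylinder 0 zero = W.
  move=> W; rewrite (_ : cylinder 0 zero = setT) ?setIT //; apply/seteqP; split => x // _ i; rewrite ltn0.
have detW : forall x y0, agreeb M x y0 -> Wc x -> Wc y0.
  move=> x y0 /agreebP hxy hx i lti; rewrite -hxy //; exact: hx.
have [_ es] := @meas_val R s mu_s Hs Wc M detW M 0 zero (add0n _).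
rewrite cyl0 in es.
have detV : forall x y0, agreeb m x y0 -> (V : set BorelOmega) x -> (V : set BorelOmega) y0.
  by move=> x y0 /agreebP hxy hx; apply: hmV hx.
have [_ er] := @meas_val R r mu_r Hr V m detV m 0 zero (add0n _).
rewrite cyl0 in er.
have Zs : Zr r s.
  rewrite hsr; apply: Zr_mul; first by apply: Zr_mul; [exact: Zr_nat|exact: Zr_r].
  by apply: Zr_add; [exact: Zr_1|apply/Zr_opp/Zr_r].
have nWz : ~ Wc zero.
  by move=> hz; have := hz j jM; rewrite /zero /ee eqxx.
have nVz : ~ (V : set BorelOmega) zero.
  by move=> /VsubCy hz; have := hz p (ltnSn p); rewrite yp.
have [z2 [hz2 cs]] := @val_cong R r s Wc M Zs detW nWz M 0 zero (add0n _).
have [z1 [hz1 cr]] := @val_cong R r r V m (Zr_r r) detV nVz m 0 zero (add0n _).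
have kW : KK Wc M 0 zero = 1%N.
  rewrite /KK (_ : (\sum_(i < M) _)%N = (\sum_(i < M) ((i : nat) == j))%N).
    by rewrite sum_eqp jM.
  apply: eq_bigr => i _; congr (nat_of_bool _); rewrite andbT.
  apply: (asbool_equiv_eqP eqP).
  split => [hi|->]; last by move=> k _.
  by have := hi j jM; rewrite /ee eqxx => /eqP.
have kV : (KK V m 0 zero <= 1)%N.
  rewrite /KK (leq_trans _ (_ : (\sum_(i < m) ((i : nat) == p) <= 1)%N)) //.
    apply: leq_sum => i _; rewrite andbT.
    case: asboolP => // hi; have := VsubCy _ hi p (ltnSn p).
    by rewrite yp /ee => /eqP ->; rewrite eqxx.
  by rewrite sum_eqp; case: (p < m)%N.
move: heq; rewrite -/V es er => -[eY].
set k := KK V m 0 zero in kV cr.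
rewrite kW in cs.
have hw : r * ((k%:Z - 2)%:~R + r * (z1 + 2 - 4 * (1 - r) ^+ 2 * z2)) = 0.
  transitivity (val V r m m 0 zero - val Wc s M M 0 zero).
    rewrite cr cs rmorphB /= -pmulrn hsr; ring.
  by rewrite eY subrr.
move: hw => /eqP; rewrite mulf_eq0 (negbTE r0) /= => /eqP hw.
have Zw : Zr r (z1 + 2 - 4 * (1 - r) ^+ 2 * z2).
  apply: Zr_add; first by apply: Zr_add => //; exact: Zr_nat.
  apply: Zr_opp; apply: Zr_mul => //; apply: Zr_mul; first exact: Zr_nat.
  rewrite expr2; apply: Zr_mul; by apply: Zr_add; [exact: Zr_1|apply/Zr_opp/Zr_r].
have := @final_contra R r hp _ Zw (k%:Z - 2) hw.
case: k kV {cr hw} => [|[|//]] _ //.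
Qed.
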